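(* Let $A$ be a Leibniz algebra over $k$ satisfying Condition 1. Then the two constructions of $\mathfrak{B}(A)$, using the bracket of Definition 4.1 and the bracket of Definition 4.2 respectively, give the same algebra.
   Context: $k$ is a commutative ring with unit. A Leibniz algebra is a $k$-module $L$ with a bilinear bracket satisfying $[x,[y,z]]=[[x,y],z]-[[x,z],y]$. An action of a Leibniz algebra $B$ on a Leibniz algebra $A$ is a pair of bilinear maps $B\times A\to A$, $(b,a)\mapsto[b,a]$, and $A\times B\to A$, $(a,b)\mapsto[a,b]$, such that for all $a,a_1,a_2\in A$, $b,b_1,b_2\in B$: $[a_1,[a_2,b]]=[[a_1,a_2],b]-[[a_1,b],a_2]$; $[a_1,[b,a_2]]=[[a_1,b],a_2]-[[a_1,a_2],b]$; $[b,[a_1,a_2]]=[[b,a_1],a_2]-[[b,a_2],a_1]$; $[a,[b_1,b_2]]=[[a,b_1],b_2]-[[a,b_2],b_1]$; $[b_1,[a,b_2]]=[[b_1,a],b_2]-[[b_1,b_2],a]$; $[b_1,[b_2,a]]=[[b_1,b_2],a]-[[b_1,a],b_2]$. Condition 1: for any two Leibniz algebras $B,C$ acting on $A$, $[c,[a,b]]=-[c,[b,a]]$ for all $a\in A$, $b\in B$, $c\in C$. Construction of $\mathfrak{B}(A)$: let $(B_j)_{j\in J}$ range over all Leibniz algebras equipped with an action on $A$ (one index per action). For $b\in B_j$ let $\mathbf b$ be the pair of $k$-linear maps $A\to A$, $a\mapsto[a,\mathbf b]:=[a,b]$ and $a\mapsto[\mathbf b,a]:=[b,a]$. On pairs $x=([-,x],[x,-])$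 of $k$-linear maps $A\to A$ define addition and scalar multiplication componentwise, and a bracket $[x,y]$ by either Definition 4.1: $[a,[x,y]]=[[a,x],y]-[[a,y],x]$, $[[x,y],a]=[x,[y,a]]+[[x,a],y]$; or Definition 4.2: $[a,[x,y]]=[[a,x],y]-[[a,y],x]$, $[[x,y],a]=-[x,[a,y]]+[[x,a],y]$. $\mathfrak{B}(A)$ is the set of pairs obtained from all the $\mathbf b$ by iterating these operations, with these operations. *)

(* Defs.v *)
From HB Require Import structures.
From mathcomp Require Import all_boot all_algebra.
Set Implicit Arguments. Unset Strict Implicit. Unset Printing Implicit Defensive.
Import GRing.Theory.
Local Open Scope ring_scope.

Record leibniz_alg (k : comPzRingType) := LeibnizAlg {
  carrier :> lmodType k;
  lbr : carrier -> carrier -> carrier;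
  lbr_linl : forall (c : k) (x y z : carrier),
      lbr (c *: x + y) z = c *: lbr x z + lbr y z;
  lbr_linr : forall (c : k) (x y z : carrier),
      lbr x (c *: y + z) = c *: lbr x y + lbr x z;
  lbr_leibniz : forall x y z : carrier,
      lbr x (lbr y z) = lbr (lbr x y) z - lbr (lbr x z) y
}.

(* An action of the Leibniz algebra B on the Leibniz algebra A:
   actl b a = [b,a]  and  actr a b = [a,b]. *)
Record action (k : comPzRingType) (B A : leibniz_alg k) := Action {
  actl : B -> A -> A;
  actr : A -> B -> A;
  actl_linl : forall (c : k) (b1 b2 : B) (a : A),
      actl (c *: b1 + b2) a = c *: actl b1 a + actl b2 a;
  actl_linr : forall (c : k) (b : B) (a1 a2 : A),
      actl b (c *: a1 + a2) = c *: actl b a1 + actl b a2;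
  actr_linl : forall (c : k) (a1 a2 : A) (b : B),
      actr (c *: a1 + a2) b = c *: actr a1 b + actr a2 b;
  actr_linr : forall (c : k) (a : A) (b1 b2 : B),
      actr a (c *: b1 + b2) = c *: actr a b1 + actr a b2;
  act_ax1 : forall (a1 a2 : A) (b : B),
      lbr a1 (actr a2 b) = actr (lbr a1 a2) b - lbr (actr a1 b) a2;
  act_ax2 : forall (a1 a2 : A) (b : B),
      lbr a1 (actl b a2) = lbr (actr a1 b) a2 - actr (lbr a1 a2) b;
  act_ax3 : forall (a1 a2 : A) (b : B),
      actl b (lbr a1 a2) = lbr (actl b a1) a2 - lbr (actl b a2) a1;
  act_ax4 : forall (a : A) (b1 b2 : B),
      actr a (lbr b1 b2) = actr (actr a b1) b2 - actr (actr a b2) b1;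
  act_ax5 : forall (a : A) (b1 b2 : B),
      actl b1 (actr a b2) = actr (actl b1 a) b2 - actl (lbr b1 b2) a;
  act_ax6 : forall (a : A) (b1 b2 : B),
      actl b1 (actl b2 a) = actl (lbr b1 b2) a - actr (actl b1 a) b2
}.

Definition condition1 (k : comPzRingType) (A : leibniz_alg k) : Prop :=
  forall (B C : leibniz_alg k) (actB : action B A) (actC : action C A)
         (a : A) (b : B) (c : C),
    actl actC c (actr actB a b) = - actl actC c (actl actB b a).

(* A "pair" x = ([-,x],[x,-]) of maps A -> A:
   fst x a = [a,x], snd x a = [x,a]. *)
Definition pair_of (k : comPzRingType) (A : leibniz_alg k) : Type :=
  ((A -> A) * (A -> A))%type.

Definition pair_add (k : comPzRingType) (A : leibniz_alg k)
  (x y : pair_of A) : pair_of A :=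
  (fun a => x.1 a + y.1 a, fun a => x.2 a + y.2 a).

Definition pair_scale (k : comPzRingType) (A : leibniz_alg k)
  (c : k) (x : pair_of A) : pair_of A :=
  (fun a => c *: x.1 a, fun a => c *: x.2 a).

(* Definition 4.1:
   [a,[x,y]] = [[a,x],y] - [[a,y],x],  [[x,y],a] = [x,[y,a]] + [[x,a],y]. *)
Definition bracket41 (k : comPzRingType) (A : leibniz_alg k)
  (x y : pair_of A) : pair_of A :=
  (fun a => y.1 (x.1 a) - x.1 (y.1 a),
   fun a => x.2 (y.2 a) + y.1 (x.2 a)).

(* Definition 4.2:
   [a,[x,y]] = [[a,x],y] - [[a,y],x],  [[x,y],a] = -[x,[a,y]] + [[x,a],y]. *)
Definition bracket42 (k : comPzRingType) (A : leibniz_alg k)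
  (x y : pair_of A) : pair_of A :=
  (fun a => y.1 (x.1 a) - x.1 (y.1 a),
   fun a => - x.2 (y.1 a) + y.1 (x.2 a)).

Definition pair_of_elt (k : comPzRingType) (A B : leibniz_alg k)
  (act : action B A) (b : B) : pair_of A :=
  (fun a => actr act a b, fun a => actl act b a).

Inductive frakB (k : comPzRingType) (A : leibniz_alg k)
    (br : pair_of A -> pair_of A -> pair_of A) : pair_of A -> Prop :=
  | frakB_gen : forall (B : leibniz_alg k) (act : action B A) (b : B),
      frakB br (pair_of_elt act b)
  | frakB_add : forall x y, frakB br x -> frakB br y -> frakB br (pair_add x y)
  | frakB_scale : forall (c : k) x, frakB br x -> frakB br (pair_scale c x)
  | frakB_br : forall x y, frakB br x -> frakB br y -> frakB br (br x y).

(* Main.v *)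
Require Import Defs.
From mathcomp Require Import all_boot all_algebra.
From Stdlib Require Import FunctionalExtensionality.
Import GRing.Theory.
Local Open Scope ring_scope.
Set Implicit Arguments. Unset Strict Implicit.

Section Aux.
Variable k : comPzRingType.
Variable A : leibniz_alg k.

Definition addf (f : A -> A) := forall u v : A, f (u + v) = f u + f v.

Lemma addf0 f : addf f -> f 0 = 0.
Proof.
move=> H; apply: (@addrI _ (f 0)); by rewrite -H !addr0.
Qed.

Lemma addfN f : addf f -> forall u, f (- u) = - f u.
Proof.
move=> H u; apply/eqP; rewrite -subr_eq0 opprK -H addNr (addf0 H) //.
Qed.

Definition Zs (w : A) := forall (C : leibniz_alg k) (act : action C A) (c : C),
  actl act c w = 0.

Lemma actl_add (C : leibniz_alg k) (act : action C A) (c : C) : addf (actl act c).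
Proof. by move=> u v; have := actl_linr act 1 c u v; rewrite !scale1r. Qed.

Lemma actr_add (C : leibniz_alg k) (act : action C A) (c : C) :
  addf (fun a => actr act a c).
Proof. by move=> u v; have := actr_linl act 1 u v c; rewrite !scale1r. Qed.

Lemma actl_scale (C : leibniz_alg k) (act : action C A) (c : C) (s : k) u :
  actl act c (s *: u) = s *: actl act c u.
Proof.
have := actl_linr act s c u 0; rewrite addr0 => ->.
by rewrite (addf0 (actl_add act c)) addr0.
Qed.

Lemma Zs_add u v : Zs u -> Zs v -> Zs (u + v).
Proof. by move=> Hu Hv C act c; rewrite actl_add Hu Hv addr0. Qed.

Lemma Zs_scale s u : Zs u -> Zs (s *: u).
Proof. by move=> Hu C act c; rewrite actl_scale Hu scaler0. Qed.

Definition Good (x : pair_of A) :=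
  [/\ addf x.1, addf x.2, (forall w, Zs w -> x.2 w = 0) &
      (forall a, Zs (x.1 a + x.2 a))].

Lemma good_gen (B : leibniz_alg k) (act : action B A) (b : B) :
  condition1 A -> Good (pair_of_elt act b).
Proof.
move=> H1; split => /=.
- exact: actr_add.
- exact: actl_add.
- by move=> w Hw; apply: Hw.
- move=> a C actC c; rewrite actl_add H1 addNr //.
Qed.

Lemma good_add x y : Good x -> Good y -> Good (pair_add x y).
Proof.
move=> [x1 x2 x3 x4] [y1 y2 y3 y4]; split => /=.
- by move=> u v; rewrite x1 y1 addrACA.
- by move=> u v; rewrite x2 y2 addrACA.
- by move=> w Hw; rewrite x3 // y3 // addr0.
- by move=> a; rewrite addrACA; apply: Zs_add.
Qed.

Lemma good_scale s x : Good x -> Good (pair_scale s x).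
Proof.
move=> [x1 x2 x3 x4]; split => /=.
- by move=> u v; rewrite x1 scalerDr.
- by move=> u v; rewrite x2 scalerDr.
- by move=> w Hw; rewrite x3 // scaler0.
- by move=> a; rewrite -scalerDr; apply: Zs_scale.
Qed.

Lemma Zs_R y u : Good y -> forall (C : leibniz_alg k) (act : action C A) (c : C),
  actl act c (y.1 u) = - actl act c (y.2 u).
Proof.
move=> [y1 y2 y3 y4] C act c; apply/eqP; rewrite -subr_eq0 opprK -actl_add.
by rewrite y4.
Qed.

Lemma good_br42 x y : Good x -> Good y -> Good (bracket42 x y).
Proof.
move=> Gx Gy; have [x1 x2 x3 x4] := Gx; have [y1 y2 y3 y4] := Gy.
split => /=.
- by move=> u v /=; rewrite x1 y1 (y1 u v) x1 opprD addrACA.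
- by move=> u v /=; rewrite (y1 u v) x2 (x2 u v) y1 opprD addrACA.
- move=> w Hw.
  have -> : y.1 w = y.1 w + y.2 w by rewrite (y3 w Hw) addr0.
  by rewrite x3 // x3 // oppr0 (addf0 y1) addr0.
- move=> a C act c.
  rewrite !(actl_add act c) !(addfN (actl_add act c)).
  rewrite (Zs_R _ Gy) (Zs_R (x.2 a) Gy) (Zs_R (y.1 a) Gx).
  have -> : actl act c (y.2 (x.1 a)) = - actl act c (y.2 (x.2 a)).
    by apply/eqP; rewrite -subr_eq0 opprK -actl_add -y2 y3 ?x4 // (addf0 (actl_add act c)).
  have -> : actl act c (x.2 (y.1 a)) = - actl act c (x.2 (y.2 a)) :> A.
    by apply/eqP; rewrite -subr_eq0 opprK -actl_add -x2 x3 ?y4 // (addf0 (actl_add act c)).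
  move: (actl act c (y.2 (x.2 a))) (actl act c (x.2 (y.2 a))) => p q.
  by rewrite !opprK -(opprB p q) subrr.
Qed.

Lemma br_eq x y : Good x -> Good y -> bracket41 x y = bracket42 x y.
Proof.
move=> [x1 x2 x3 x4] [y1 y2 y3 y4]; rewrite /bracket41 /bracket42; congr pair.
apply: functional_extensionality => a; congr (_ + _).
apply/eqP; rewrite -subr_eq0 opprK addrC -x2 x3 //.
Qed.

End Aux.

Theorem proposition4p3 (k : comPzRingType) (A : leibniz_alg k) :
  condition1 A ->
  (forall x : pair_of A, frakB (@bracket41 k A) x <-> frakB (@bracket42 k A) x) /\
  (forall x y : pair_of A, frakB (@bracket41 k A) x -> frakB (@bracket41 k A) y ->
     bracket41 x y = bracket42 x y).
Proof.
move=> H1.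
have G41 : forall x, frakB (@bracket41 k A) x -> Good x.
  move=> x; elim => {x}.
  - by move=> B act b; apply: good_gen.
  - by move=> x y _ ? _ ?; apply: good_add.
  - by move=> c x _ ?; apply: good_scale.
  - by move=> x y _ ? _ ?; rewrite br_eq //; apply: good_br42.
have G42 : forall x, frakB (@bracket42 k A) x -> Good x.
  move=> x; elim => {x}.
  - by move=> B act b; apply: good_gen.
  - by move=> x y _ ? _ ?; apply: good_add.
  - by move=> c x _ ?; apply: good_scale.
  - by move=> x y _ ? _ ?; apply: good_br42.
split; last by move=> x y /G41 ? /G41 ?; apply: br_eq.
move=> x; split.
- elim => {x}.
  + by move=> B act b; apply: frakB_gen.
  + by move=> x y _ ? _ ?; apply: frakB_add.
  + by move=> c x _ ?; apply: frakB_scale.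
  + move=> x y Hx ? Hy ?; rewrite br_eq; [exact: frakB_br | exact: G41 | exact: G41].
- elim => {x}.
  + by move=> B act b; apply: frakB_gen.
  + by move=> x y _ ? _ ?; apply: frakB_add.
  + by move=> c x _ ?; apply: frakB_scale.
  + move=> x y Hx ? Hy ?; rewrite -br_eq; [exact: frakB_br | exact: G42 | exact: G42].
Qed.
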